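(* For every graph $G$ of order $n$ and every $2\le k\le n$, $\lambda_k(\overleftrightarrow{G})\ge \lambda_k(G)$. Moreover, this bound is sharp. In particular, $\lambda_2(\overleftrightarrow{G})=\lambda_2(G)$.
   Context: Graphs are finite simple undirected. $\overleftrightarrow{G}$ is the symmetric digraph obtained from $G$ by replacing each edge $xy$ by the two arcs $xy$ and $yx$. For a graph $G$ and $S\subseteq V(G)$ with $|S|\ge 2$, an $S$-tree is a subtree of $G$ containing $S$; $\lambda_S(G)$ is the maximum number of pairwise edge-disjoint $S$-trees, and $\lambda_k(G)=\min\{\lambda_S(G):S\subseteq V(G),|S|=k\}$ (generalized $k$-edge-connectivity; $\lambda_2(G)$ is the edge-connectivity). For a digraph $D$ and $S\subseteq V(D)$, $\lambda_S(D)$ is the maximum number of pairwise arc-disjoint strong subgraphs of $D$ containing $S$, and $\lambda_k(D)=\min\{\lambda_S(D): S\subseteq V(D), |S|=k\}$. *)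

(* Defs.v *)
From mathcomp Require Import all_boot.
Set Implicit Arguments. Unset Strict Implicit. Unset Printing Implicit Defensive.

(* A finite simple graph G on vertex type T is an adjacency relation
   e : rel T that is symmetric and irreflexive (hypotheses in the theorem).
   Its order is #|T|. *)

Section Defs.
Variable T : finType.
Variable e : rel T.

Definition gedges : {set {set T}} :=
  [set f : {set T} | [exists x, exists y, e x y && (f == [set x; y])]].

Definition edge_rel (F : {set {set T}}) : rel T :=
  fun x y => (x != y) && ([set x; y] \in F).

Definition is_subgraph (V : {set T}) (F : {set {set T}}) : bool :=
  (F \subset gedges) && [forall f in F, f \subset V].

Definition sg_connected (V : {set T}) (F : {set {set T}}) : bool :=
  [forall x in V, forall y in V, connect (edge_rel F) x y].

(* (V,F) has no cycle: no sequence of m >= 3 distinct vertices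
   v_0 ... v_(m-1) with v_i v_(i+1) and v_(m-1) v_0 edges of F.
   (A cycle has at most #|T| vertices.) *)
Definition sg_acyclic (F : {set {set T}}) : bool :=
  ~~ [exists m : 'I_(#|T|.+1), exists c : m.-tuple T,
        (2 < m) && ucycleb (edge_rel F) c].

Definition is_Stree (S V : {set T}) (F : {set {set T}}) : bool :=
  [&& is_subgraph V F, sg_connected V F, sg_acyclic F & S \subset V].

Definition tree_packing (S : {set T}) (m : nat) : bool :=
  [exists f : {ffun 'I_m -> {set T} * {set {set T}}},
     [forall i, is_Stree S (f i).1 (f i).2] &&
     [forall i, forall j, (i != j) ==> [disjoint (f i).2 & (f j).2]]].

(* lambda_S(G): maximum number of pairwise edge-disjoint S-trees.
   (Each S-tree with |S| >= 2 has an edge, so this number is <= #|E(G)|.) *)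
Definition lamS_G (S : {set T}) : nat :=
  \max_(m < #|gedges|.+1 | tree_packing S m) m.

Definition lamk_G (k : nat) : nat :=
  \big[minn/#|gedges|]_(S : {set T} | #|S| == k) lamS_G S.

(* The symmetric digraph of G: arcs (x,y) and (y,x) for each edge xy. *)
Definition darcs : {set T * T} := [set p : T * T | e p.1 p.2].

Definition is_strong_sub (V : {set T}) (A : {set T * T}) : bool :=
  [&& A \subset darcs, [forall a in A, (a.1 \in V) && (a.2 \in V)] &
      [forall x in V, forall y in V, connect (fun u v => (u, v) \in A) x y]].

Definition strong_packing (S : {set T}) (m : nat) : bool :=
  [exists f : {ffun 'I_m -> {set T} * {set T * T}},
     [forall i, is_strong_sub (f i).1 (f i).2 && (S \subset (f i).1)] &&
     [forall i, forall j, (i != j) ==> [disjoint (f i).2 & (f j).2]]].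

(* lambda_S(D): maximum number of pairwise arc-disjoint strong subgraphs
   containing S (each has an arc when |S| >= 2, so it is <= #|A(D)|). *)
Definition lamS_D (S : {set T}) : nat :=
  \max_(m < #|darcs|.+1 | strong_packing S m) m.

Definition lamk_D (k : nat) : nat :=
  \big[minn/#|darcs|]_(S : {set T} | #|S| == k) lamS_D S.

Definition g_connected : bool := [forall x, forall y, connect e x y].

End Defs.

(* Main.v *)
Require Import Defs.
From mathcomp Require Import all_boot.
Set Implicit Arguments. Unset Strict Implicit. Unset Printing Implicit Defensive.

Section G.
Variable T : finType.
Variable e : rel T.
Hypothesis e_sym : symmetric e.
Hypothesis eirr : irreflexive e.

Lemma edge_rel_sym (F : {set {set T}}) : symmetric (edge_rel F).
Proof. by move=> x y; rewrite /edge_rel eq_sym setUC. Qed.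

Lemma set2_eqE (x y a b : T) : [set x; y] = [set a; b] ->
  (x = a /\ y = b) \/ (x = b /\ y = a).
Proof.
move=> E.
have hx : x \in [set a; b] by rewrite -E set21.
have hy : y \in [set a; b] by rewrite -E set22.
have ha : a \in [set x; y] by rewrite E set21.
have hb : b \in [set x; y] by rewrite E set22.
move: hx hy ha hb; rewrite !inE.
by do 4 (case/orP=> /eqP ?); subst; auto.
Qed.

Lemma cycle_edge (F : {set {set T}}) (c : seq T) : 2 < size c ->
  ucycleb (edge_rel F) c ->
  exists a b, edge_rel F a b /\ connect (edge_rel (F :\ [set a; b])) a b.
Proof.
case: c => [|c0 [|c1 [|r1 rest]]] //= _ /andP[cyc uq].
move: cyc => /= /andP[e01 /andP[e1r pth]].
exists c0, c1; split=> //.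
rewrite (sym_connect_sym (@edge_rel_sym _)).
apply/connectP; exists (r1 :: rcons rest c0); last by rewrite /= last_rcons.
move: uq; rewrite /= !inE !negb_or => /andP[/and3P[n01 n0r n0rest] /andP[/andP[n1r n1rest] _]].
apply/andP; split.
  move: e1r; rewrite /edge_rel !inE => /andP[-> ->]; rewrite andbT /=.
  apply/negP=> /eqP/set2_eqE [[E1 E2]|[E1 E2]].
  - by move: n01; rewrite E1 eqxx.
  - by move: n0r; rewrite E2 eqxx.
apply: (sub_in_path (P := predC1 c1)) pth.
  move=> a b /= ha hb; rewrite /edge_rel !inE => /andP[-> ->]; rewrite andbT /=.
  apply/negP=> /eqP E; have : c1 \in [set a; b] by rewrite E set22.
  by rewrite !inE eq_sym (negbTE ha) eq_sym (negbTE hb).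
rewrite /= all_rcons /= eq_sym n1r n01 /=.
by apply/allP=> z hz /=; apply: contraNneq n1rest => <-.
Qed.

Lemma min_tree (V : {set T}) (F : {set {set T}}) :
  is_subgraph e V F -> sg_connected V F ->
  exists F' : {set {set T}}, F' \subset F /\ [&& is_subgraph e V F', sg_connected V F' & sg_acyclic F'].
Proof.
move: {2}#|F|.+1 (ltnSn #|F|) => n; elim: n F => // n IH F hn hsub hcon.
case: (boolP (sg_acyclic F)) => hac.
  by exists F; rewrite subxx hsub hcon hac.
move: hac; rewrite negbK => /existsP[m /existsP[c /andP[hm hc]]].
have hsz : 2 < size c by rewrite size_tuple.
have [a [b [eab cab]]] := cycle_edge hsz hc.
set F1 := F :\ [set a; b].
have F1F : F1 \subset F by apply: subD1set.
have hab : [set a; b] \in F by case/andP: eab.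
have hn1 : #|F1| < n.
  by move: hn; rewrite (cardsD1 [set a; b] F) hab.
have hsub1 : is_subgraph e V F1.
  move: hsub => /andP[h1 /forallP h2]; apply/andP; split.
    exact: subset_trans F1F h1.
  apply/forallP=> f; apply/implyP=> hf; move/implyP: (h2 f); apply.
  exact: (subsetP F1F).
have hcon1 : sg_connected V F1.
  apply/forallP=> u; apply/implyP=> hu; apply/forallP=> w; apply/implyP=> hw.
  move/forallP: hcon => /(_ u) /implyP /(_ hu) /forallP /(_ w) /implyP /(_ hw).
  apply: connect_sub => x y hxy.
  case: (boolP ([set x; y] == [set a; b])) => [/eqP/set2_eqE [[-> ->]|[-> ->]]|hne].
  - exact: cab.
  - by rewrite (sym_connect_sym (@edge_rel_sym _)).
  - apply: connect1; move: hxy; rewrite /edge_rel !inE => /andP[-> ->].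
    by rewrite hne.
have [F' [F'F1 H]] := IH F1 hn1 hsub1 hcon1.
by exists F'; split=> //; apply: subset_trans F'F1 F1F.
Qed.


Lemma path_subgraph (F : {set {set T}}) x y : F \subset gedges e ->
  connect (edge_rel F) x y ->
  exists (V : {set T}) (F1 : {set {set T}}),
    [/\ F1 \subset F, is_subgraph e V F1, sg_connected V F1, x \in V & y \in V].
Proof.
move=> FG /connectP[p hp ->].
pose V := [set v in x :: p].
pose F1 := [set f in F | f \subset V].
have F1F : F1 \subset F by apply/subsetP=> f; rewrite inE => /andP[].
have hp1 : path (edge_rel F1) x p.
  apply: (sub_in_path (P := mem V)) hp; last first.
    by apply/allP=> z hz; change (z \in V); rewrite inE.
  move=> a b ha hb; rewrite /edge_rel !inE => /andP[-> ->] /=.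
  by rewrite subUset !sub1set ha hb.
have cx : forall u, u \in V -> connect (edge_rel F1) x u.
  by move=> u; rewrite inE; apply: path_connect.
exists V, F1; split=> //.
- apply/andP; split; first exact: subset_trans F1F FG.
  by apply/forallP=> f; apply/implyP; rewrite inE => /andP[].
- apply/forallP=> u; apply/implyP=> hu; apply/forallP=> w; apply/implyP=> hw.
  apply: connect_trans (cx w hw).
  by rewrite (sym_connect_sym (@edge_rel_sym _)); apply: cx.
- by rewrite inE mem_head.
- by rewrite inE mem_last.
Qed.

Lemma tree_of (F : {set {set T}}) x y : F \subset gedges e ->
  connect (edge_rel F) x y ->
  exists (V : {set T}) (F1 : {set {set T}}),
    F1 \subset F /\ is_Stree e [set x; y] V F1.
Proof.
move=> FG hc; have [V [F1 [F1F hs hc1 hx hy]]] := path_subgraph FG hc.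
have [F2 [F2F1 /and3P[h1 h2 h3]]] := min_tree hs hc1.
exists V, F2; split; first exact: subset_trans F2F1 F1F.
by rewrite /is_Stree h1 h2 h3 subUset !sub1set hx hy.
Qed.

End G.
Section Flow.
Variable T : finType.

Definition od (A : {set T * T}) v := \sum_(a in A) (a.1 == v).
Definition idg (A : {set T * T}) v := \sum_(a in A) (a.2 == v).

Fixpoint parcs (x : T) (p : seq T) : {set T * T} :=
  if p is z :: p' then (x, z) |: parcs z p' else set0.

Lemma parcs_mem x p a : a \in parcs x p -> (a.1 \in x :: p) && (a.2 \in p).
Proof.
elim: p x => [|z p IH] x /=; first by rewrite inE.
rewrite !inE => /orP[/eqP -> | /IH /andP[h1 h2]]; first by rewrite !eqxx.
by move: h1; rewrite inE => ->; rewrite h2 !orbT.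
Qed.

Lemma parcs_path (r : rel T) x p : path r x p -> forall a, a \in parcs x p -> r a.1 a.2.
Proof.
elim: p x => [|z p IH] x //=; first by move=> _ a; rewrite inE.
move=> /andP[hxz hp] a; rewrite !inE => /orP[/eqP -> //|]; exact: IH.
Qed.

Lemma parcs_connect x p : connect (fun u w => (u, w) \in parcs x p) x (last x p).
Proof.
apply/connectP; exists p => //.
elim: p x => [|z p IH] x //=; rewrite !inE eqxx /=.
apply: sub_path (IH z) => u w /=; rewrite !inE => ->; exact: orbT.
Qed.

Lemma od_U1 (a : T * T) (A : {set T * T}) v : a \notin A -> od (a |: A) v = (a.1 == v) + od A v.
Proof. by move=> ha; rewrite /od big_setU1. Qed.
Lemma idg_U1 (a : T * T) (A : {set T * T}) v : a \notin A -> idg (a |: A) v = (a.2 == v) + idg A v.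
Proof. by move=> ha; rewrite /idg big_setU1. Qed.

Lemma od0 (A : {set T * T}) v : (forall a, a \in A -> a.1 != v) -> od A v = 0.
Proof. by move=> h; rewrite /od big1 // => a /h /negbTE ->. Qed.
Lemma idg0 (A : {set T * T}) v : (forall a, a \in A -> a.2 != v) -> idg A v = 0.
Proof. by move=> h; rewrite /idg big1 // => a /h /negbTE ->. Qed.

Lemma parcs_inv x p : uniq (x :: p) ->
  (p != [::] -> od (parcs x p) x = 1 /\ idg (parcs x p) x = 0) /\
  (forall v, v != x -> v != last x p -> od (parcs x p) v = idg (parcs x p) v).
Proof.
elim: p x => [|z p IH] x /=.
  by move=> _; split=> // v _ _; rewrite /od /idg !big_set0.
rewrite inE negb_or => /andP[/andP[nxz nxp] uq].
have [IH1 IH2] := IH z uq.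
have nin : (x, z) \notin parcs z p.
  apply/negP=> /parcs_mem /andP[h _]; move: h; rewrite /= inE.
  by rewrite (negbTE nxz) (negbTE nxp).
have odx : od (parcs z p) x = 0.
  apply: od0 => a /parcs_mem /andP[h _]; apply/negP=> /eqP E.
  by move: h; rewrite E inE (negbTE nxz) (negbTE nxp).
have idx : idg (parcs z p) x = 0.
  apply: idg0 => a /parcs_mem /andP[_ h]; apply/negP=> /eqP E.
  by move: h; rewrite E (negbTE nxp).
split.
  by move=> _; rewrite od_U1 // idg_U1 // odx idx /= eqxx eq_sym (negbTE nxz).
move=> v hvx hvl; rewrite od_U1 // idg_U1 //= eq_sym (negbTE hvx) add0n.
case: (boolP (z == v)) => [/eqP E|hzv].
  subst v; clear IH; case: p IH1 IH2 uq hvl {nxp nin odx idx} => [|w p] IH1 IH2 uq hvl.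
    by rewrite eqxx in hvl.
  by have [-> ->] := IH1 isT.
by rewrite add0n; apply: IH2; rewrite // eq_sym.
Qed.


Lemma sum_eq_in (R : {set T}) (u : T) : \sum_(v in R) (u == v) = (u \in R).
Proof.
case: (boolP (u \in R)) => h.
  rewrite (bigD1 u) //= eqxx big1 // => v /andP[_ hv]; by rewrite eq_sym (negbTE hv).
rewrite big1 // => v hv; case: eqP => // E; by rewrite E hv in h.
Qed.

Lemma reach (B : {set T * T}) x y :
  (forall v, v != x -> v != y -> idg B v <= od B v) -> idg B x < od B x ->
  connect (fun u w => (u, w) \in B) x y.
Proof.
move=> hint hx; apply/idPn => nc.
set r := (fun u w => (u, w) \in B) in nc *.
pose R := [set v | connect r x v].
have s1 : \sum_(v in R) od B v = \sum_(a in B) (a.1 \in R).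
  by rewrite /od exchange_big; apply: eq_bigr => a _; rewrite sum_eq_in.
have s2 : \sum_(v in R) idg B v = \sum_(a in B) (a.2 \in R).
  by rewrite /idg exchange_big; apply: eq_bigr => a _; rewrite sum_eq_in.
have le12 : \sum_(a in B) (a.1 \in R) <= \sum_(a in B) (a.2 \in R).
  apply: leq_sum => a ha; case: (boolP (a.1 \in R)) => // h1.
  rewrite inE in h1; rewrite inE (connect_trans h1) //; apply: connect1.
  by rewrite /r -surjective_pairing.
have xR : x \in R by rewrite inE connect0.
have lt : \sum_(v in R) idg B v < \sum_(v in R) od B v.
  rewrite (bigD1 x) //= [X in _ < X](bigD1 x) //= -addSn; apply: leq_add => //.
  apply: leq_sum => v /andP[hv hvx]; apply: hint => //.
  by apply: contraNneq nc => <-; rewrite inE in hv.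
by move: lt; rewrite s1 s2 ltnNge le12.
Qed.


Lemma od_split (B P : {set T * T}) v : P \subset B ->
  od B v = od P v + od (B :\: P) v /\ idg B v = idg P v + idg (B :\: P) v.
Proof.
move=> PB; rewrite /od /idg !(big_setID (A := B) P) /=.
by rewrite (setIidPr PB).
Qed.

Lemma decomp x y : x != y -> forall m (B : {set T * T}),
  (forall v, v != x -> v != y -> od B v = idg B v) -> idg B x + m <= od B x ->
  exists C : 'I_m -> {set T * T},
    [/\ forall i, C i \subset B, forall i j, i != j -> [disjoint C i & C j]
      & forall i, connect (fun u w => (u, w) \in C i) x y].
Proof.
move=> nxy; elim=> [|m IH] B hint hx.
  by exists (fun _ => set0); split; case.
have c : connect (fun u w => (u, w) \in B) x y.
  apply: reach; first by move=> v h1 h2; rewrite hint.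
  by apply: leq_trans hx; rewrite addnS ltnS leq_addr.
move/connectP: c => [p hp hy].
case/shortenP: hp hy => p' hp' uq _ hy.
pose P := parcs x p'.
have PB : P \subset B.
  by apply/subsetP=> a /(parcs_path hp'); rewrite -surjective_pairing.
have [I1 I2] := parcs_inv uq.
have np' : p' != [::] by case: p' {hp' uq I1 I2 P PB} hy => //= E; rewrite E eqxx in nxy.
have [ox ix] := I1 np'.
pose B' := B :\: P.
have hint' : forall v, v != x -> v != y -> od B' v = idg B' v.
  move=> v h1 h2; have [e1 e2] := od_split v PB.
  have := hint v h1 h2; rewrite e1 e2 (I2 v h1); last by rewrite -hy.
  by move/addnI.
have hx' : idg B' x + m <= od B' x.
  have [e1 e2] := od_split x PB; move: hx; rewrite e1 e2 ox ix add0n.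
  by rewrite addnS add1n ltnS.
have [C' [C1 C2 C3]] := IH B' hint' hx'.
exists (fun i => if unlift ord_max i is Some j then C' j else P); split.
- move=> i; case: (unliftP ord_max i) => [j _|_] //.
  by apply: subset_trans (C1 j) _; apply: subsetDl.
- have dP : forall j, [disjoint C' j & P].
    move=> j; apply: disjointWl (C1 j) _.
    by rewrite disjoints_subset /B' setDE subsetIr.
  move=> i j; case: (unliftP ord_max i) => [i' ->|->];
    case: (unliftP ord_max j) => [j' ->|->] //.
  all: try move=> h; first [ by apply: C2; apply: contraNneq h => -> | exact: (dP _)
     | by rewrite disjoint_sym; exact: (dP _) | by rewrite eqxx in h | idtac ].
  case: (unliftP ord_max h) => [j _|_]; [exact: C3 | rewrite hy; apply: parcs_connect].
Qed.

End Flow.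

Section Key.
Variable T : finType.
Variable e : rel T.
Hypothesis e_sym : symmetric e.
Hypothesis eirr : irreflexive e.

Lemma od_swap (Q : {set T * T}) v :
  (forall a, a \in Q -> swap_pair a \in Q) -> od Q v = idg Q v.
Proof.
move=> hQ; rewrite /od /idg (reindex_inj (can_inj swap_pairK)) /=.
apply: eq_bigl => a; apply/idP/idP => [/hQ|/hQ //]; by rewrite swap_pairK.
Qed.

Lemma strong_to_tree (S : {set T}) m : #|S| = 2 ->
  strong_packing e S m -> tree_packing e S m.
Proof.
move/eqP/cards2P => [x [y [nxy ->]]].
move/existsP => [f /andP[/forallP hf /forallP hd]].
have hp : forall i, exists p, [/\ path (fun u w => (u, w) \in (f i).2) x p,
    uniq (x :: p) & y = last x p].
  move=> i; have /andP[/and3P[_ _ /forallP hc] hS] := hf i.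
  have hx : x \in (f i).1 by apply: (subsetP hS); rewrite set21.
  have hy : y \in (f i).1 by apply: (subsetP hS); rewrite set22.
  move: (hc x); rewrite hx /= => /forallP /(_ y); rewrite hy /=.
  move/connectP=> [p hp0 ->]; case/shortenP: hp0 => p' h1 h2 _.
  by exists p'.
have [ps hps] := fin_all_exists hp.
pose P i := parcs x (ps i).
have sD : forall i, (f i).2 \subset darcs e.
  by move=> i; have /andP[/and3P[-> _ _] _] := hf i.
have PA : forall i, P i \subset (f i).2.
  move=> i; have [h1 _ _] := hps i; apply/subsetP=> a /(parcs_path h1).
  by rewrite -surjective_pairing.
have Pne : forall i, ps i != [::].
  move=> i; have [_ _ h] := hps i; apply/negP=> /eqP E.
  by rewrite E /= in h; rewrite h eqxx in nxy.
have Pd : forall i j, i != j -> [disjoint P i & P j].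
  move=> i j hij; apply: disjointW (PA i) (PA j) _.
  by move/forallP: (hd i) => /(_ j); rewrite hij.
pose U := \bigcup_i P i.
have odU : forall v, od U v = \sum_i od (P i) v.
  by move=> v; rewrite /od partition_disjoint_bigcup.
have idgU : forall v, idg U v = \sum_i idg (P i) v.
  by move=> v; rewrite /idg partition_disjoint_bigcup.
have UD : U \subset darcs e.
  apply/bigcupsP=> i _; exact: subset_trans (PA i) (sD i).
pose Q := [set a in U | swap_pair a \in U].
pose B := U :\: Q.
have QU : Q \subset U by apply/subsetP=> a; rewrite inE => /andP[].
have hQ : forall v, od Q v = idg Q v.
  move=> v; apply: od_swap => a; rewrite !inE => /andP[h1 h2].
  by rewrite h2 swap_pairK h1.
have hint : forall v, v != x -> v != y -> od B v = idg B v.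
  move=> v h1 h2; have [e1 e2] := od_split v QU.
  have : od U v = idg U v.
    rewrite odU idgU; apply: eq_bigr => i _; have [_ h3 h4] := hps i.
    have [_ I2] := parcs_inv h3; apply: I2 => //; by rewrite -h4.
  by rewrite e1 e2 hQ => /addnI.
have hx : idg B x + m <= od B x.
  have [e1 e2] := od_split x QU.
  have h1 : od U x = m.
    rewrite odU (eq_bigr (fun _ => 1)) ?sum1_card ?card_ord // => i _.
    have [_ h3 _] := hps i; have [I1 _] := parcs_inv h3.
    by have [-> _] := I1 (Pne i).
  have h2 : idg U x = 0.
    rewrite idgU big1 // => i _.
    have [_ h3 _] := hps i; have [I1 _] := parcs_inv h3.
    by have [_ ->] := I1 (Pne i).
  move: e1 e2; rewrite h1 h2 hQ => -> /esym /eqP; rewrite addn_eq0 => /andP[/eqP -> /eqP ->].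
  by rewrite add0n.
have [C [C1 C2 C3]] := decomp nxy hint hx.
have Banti : forall a, a \in B -> swap_pair a \notin B.
  move=> a; rewrite !inE => /andP[h1 h2]; apply/negP => /andP[_].
  by move: h1; rewrite h2 /= => /negbTE ->.
have BD : B \subset darcs e by apply: subset_trans UD; apply: subsetDl.
pose E i := [set [set a.1; a.2] | a in C i].
have EG : forall i, E i \subset gedges e.
  move=> i; apply/subsetP=> g /imsetP[a ha ->]; rewrite inE.
  have := subsetP BD a (subsetP (C1 i) a ha); rewrite inE => hea.
  by apply/existsP; exists a.1; apply/existsP; exists a.2; rewrite hea eqxx.
have Ec : forall i, connect (edge_rel (E i)) x y.
  move=> i; apply: connect_sub (C3 i) => u w huw; apply: connect1.
  have := subsetP BD _ (subsetP (C1 i) _ huw); rewrite inE /= => hea.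
  rewrite /edge_rel; apply/andP; split.
    by apply/negP=> /eqP E1; rewrite E1 eirr in hea.
  by apply/imsetP; exists (u, w).
have Ed : forall i j, i != j -> [disjoint E i & E j].
  move=> i j hij; rewrite disjoints_subset; apply/subsetP=> g /imsetP[a ha ->].
  rewrite inE; apply/negP=> /imsetP[b hb] /set2_eqE [[E1 E2]|[E1 E2]].
    have hab : a = b by rewrite [a]surjective_pairing [b]surjective_pairing E1 E2.
    by move: (C2 i j hij) => /disjointFr /(_ ha); rewrite hab hb.
  have hab : swap_pair b = a by rewrite [a]surjective_pairing E1 E2.
  have := Banti b (subsetP (C1 j) _ hb); rewrite hab.
  by rewrite (subsetP (C1 i) _ ha).
have hT : forall i, exists VF : {set T} * {set {set T}},
    VF.2 \subset E i /\ is_Stree e [set x; y] VF.1 VF.2.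
  move=> i; have [V [F1 [h1 h2]]] := tree_of (EG i) (Ec i).
  by exists (V, F1).
have [g hg] := fin_all_exists hT.
apply/existsP; exists [ffun i => g i]; apply/andP; split.
  by apply/forallP=> i; rewrite ffunE; case: (hg i).
apply/forallP=> i; apply/forallP=> j; apply/implyP=> hij; rewrite !ffunE.
apply: disjointW (proj1 (hg i)) (proj1 (hg j)) (Ed i j hij).
Qed.
End Key.

Lemma min_le (I : finType) (P : pred I) (F : I -> nat) d i0 :
  P i0 -> \big[minn/d]_(i | P i) F i <= F i0.
Proof.
move=> h; rewrite -[\big[minn/d]_(i | P i) F i]/(\big[minn/d]_(i <- index_enum I | P i) F i).
elim: (index_enum I) (mem_index_enum i0) => [|a s IH] //.
rewrite big_cons inE => /orP[/eqP <-|hs]; first by rewrite h geq_minl.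
case: (P a); last exact: IH.
exact: leq_trans (geq_minr _ _) (IH hs).
Qed.

Lemma min_le_d (I : finType) (P : pred I) (F : I -> nat) d :
  \big[minn/d]_(i | P i) F i <= d.
Proof. by elim/big_rec: _ => // i x _ hx; exact: leq_trans (geq_minr _ _) hx. Qed.

Lemma le_min (I : finType) (P : pred I) (F : I -> nat) d X :
  X <= d -> (forall i, P i -> X <= F i) -> X <= \big[minn/d]_(i | P i) F i.
Proof. by move=> h1 h2; elim/big_ind: _ => // a b ha hb; rewrite leq_min ha hb. Qed.

Lemma first_arc (T : finType) (r : rel T) v u : connect r v u -> v != u ->
  exists w, r v w.
Proof.
move/connectP=> [[|w p] /= hp ->]; first by rewrite eqxx.
by case/andP: hp => h _ _; exists w.
Qed.

Section Main.
Variable T : finType.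
Variable e : rel T.
Hypothesis e_sym : symmetric e.
Hypothesis eirr : irreflexive e.

Lemma lamS_G_le (S : {set T}) : lamS_G e S <= #|gedges e|.
Proof. by apply/bigmax_leqP => i _; rewrite -ltnS. Qed.

Lemma gedges_le : #|gedges e| <= #|darcs e|.
Proof.
apply: leq_trans (leq_imset_card (fun a : T * T => [set a.1; a.2]) (darcs e)).
apply: subset_leq_card; apply/subsetP=> g; rewrite inE.
move/existsP=> [x /existsP[y /andP[hxy /eqP ->]]].
by apply/imsetP; exists (x, y); rewrite ?inE.
Qed.

Lemma tree_to_strong (S : {set T}) m : tree_packing e S m -> strong_packing e S m.
Proof.
move/existsP=> [f /andP[/forallP hf /forallP hd]].
pose A i := [set a : T * T | edge_rel (f i).2 a.1 a.2].
apply/existsP; exists [ffun i => ((f i).1, A i)]; apply/andP; split.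
  apply/forallP=> i; rewrite ffunE /=.
  have /and4P[/andP[hG /forallP hV] hc _ hS] := hf i.
  rewrite hS andbT; apply/and3P; split.
  - apply/subsetP=> a; rewrite !inE => /andP[_ ha].
    move: (subsetP hG _ ha); rewrite inE => /existsP[x /existsP[y /andP[hxy /eqP E]]].
    by case: (set2_eqE E) => [[-> ->]|[-> ->]] //; rewrite e_sym.
  - apply/forallP=> a; apply/implyP; rewrite inE => /andP[_ ha].
    have hsub := implyP (hV _) ha.
    by rewrite !(subsetP hsub) // !inE eqxx ?orbT.
  - apply/forallP=> u; apply/implyP=> hu; apply/forallP=> w; apply/implyP=> hw.
    move/forallP: hc => /(_ u) /implyP /(_ hu) /forallP /(_ w) /implyP /(_ hw).
    by apply: connect_sub => a b hab; apply: connect1; rewrite inE.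
apply/forallP=> i; apply/forallP=> j; apply/implyP=> hij; rewrite !ffunE /=.
have := hd i; move/forallP => /(_ j); rewrite hij /= => hdij.
rewrite disjoints_subset; apply/subsetP=> a; rewrite !inE => /andP[_ ha].
by apply/negP=> /andP[_ hb]; rewrite (disjointFr hdij ha) in hb.
Qed.

Lemma lamS_le (S : {set T}) : lamS_G e S <= lamS_D e S.
Proof.
apply/bigmax_leqP => i hi.
have hi' : i < #|darcs e|.+1 by apply: leq_trans (ltn_ord i) _; rewrite ltnS gedges_le.
exact: (leq_bigmax_cond (Ordinal hi') (tree_to_strong hi)).
Qed.

Lemma part1 k : lamk_G e k <= lamk_D e k.
Proof.
apply: le_min; first exact: leq_trans (min_le_d _ _ _) gedges_le.
move=> S hS; apply: leq_trans (min_le _ _ hS) (lamS_le S).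
Qed.

Lemma tp_bound (S : {set T}) m : #|S| = 2 -> tree_packing e S m -> m <= #|gedges e|.
Proof.
move/eqP/cards2P => [x [y [nxy ->]]].
move/existsP=> [f /andP[/forallP hf /forallP hd]].
have hE : forall i, exists g, g \in (f i).2.
  move=> i; have /and4P[_ hc _ hS] := hf i.
  have hx : x \in (f i).1 by apply: (subsetP hS); rewrite set21.
  have hy : y \in (f i).1 by apply: (subsetP hS); rewrite set22.
  move/forallP: hc => /(_ x) /implyP /(_ hx) /forallP /(_ y) /implyP /(_ hy) c.
  have [w] := first_arc c nxy; rewrite /edge_rel => /andP[_ h].
  by exists [set x; w].
have [h hh] := fin_all_exists hE.
have hinj : injective h.
  move=> i j hij; case: (boolP (i == j)) => [/eqP //|nij]; exfalso.
  move/forallP: (hd i) => /(_ j); rewrite nij /= => dij.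
  by move: (disjointFr dij (hh i)); rewrite hij hh.
have : [set h i | i : 'I_m] \subset gedges e.
  apply/subsetP=> g /imsetP[i _ ->].
  by have /and4P[/andP[hG _] _ _ _] := hf i; apply: (subsetP hG).
by move/subset_leq_card; rewrite card_imset // card_ord.
Qed.

Lemma key (S : {set T}) : #|S| = 2 -> lamS_D e S <= lamS_G e S.
Proof.
move=> h2; apply/bigmax_leqP => i hi.
have tp := strong_to_tree eirr h2 hi.
have hi' : i < #|gedges e|.+1 by rewrite ltnS (tp_bound h2 tp).
exact: (leq_bigmax_cond (Ordinal hi') tp).
Qed.

Lemma part3 : 2 <= #|T| -> lamk_D e 2 = lamk_G e 2.
Proof.
move=> hT; apply/eqP; rewrite eqn_leq part1 andbT.
have [x [y [_ _ nxy]]] := card_gt1P hT.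
have hS0 : #|[set x; y]| == 2 by rewrite cards2 nxy.
apply: le_min.
  apply: leq_trans (min_le _ _ hS0) _; apply: leq_trans (key (eqP hS0)) _.
  exact: lamS_G_le.
by move=> S hS; apply: leq_trans (min_le _ _ hS) (key (eqP hS)).
Qed.

End Main.

Lemma part2 n k : 2 <= k <= n ->
  exists e : rel 'I_n, [/\ symmetric e, irreflexive e, g_connected e &
       lamk_D e k = lamk_G e k].
Proof.
case/andP=> hk hkn.
have hk0 : 0 < k by apply: leq_trans hk.
have hk1 : 1 < k by [].
have hn0 : 0 < n by apply: leq_trans hk0 hkn.
have hn1 : 1 < n by apply: leq_trans hk1 hkn.
pose z0 : 'I_n := Ordinal hn0.
pose z1 : 'I_n := Ordinal hn1.
pose e := [rel x y : 'I_n | addb (val x == 0) (val y == 0)].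
have es : symmetric e by move=> x y; rewrite /= addbC.
have ei : irreflexive e by move=> x; rewrite /= addbb.
have cz : forall x, connect e x z0.
  move=> x; case: (boolP (val x == 0)) => hx.
    by have -> : x = z0 by apply: val_inj; apply/eqP.
  by apply: connect1; rewrite /= (negbTE hx).
have gc : g_connected e.
  apply/forallP=> x; apply/forallP=> y; apply: connect_trans (cz x) _.
  by rewrite (sym_connect_sym es); exact: cz.
exists e; split=> //.
apply/eqP; rewrite eqn_leq (part1 es) andbT.
pose S0 := [set widen_ord hkn i | i : 'I_k].
have hS0 : #|S0| == k.
  rewrite card_imset ?card_ord // => a b /(congr1 val) /= h; exact: val_inj.
have z0S : z0 \in S0 by apply/imsetP; exists (Ordinal hk0) => //; apply: val_inj.
have z1S : z1 \in S0 by apply/imsetP; exists (Ordinal hk1) => //; apply: val_inj.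
have D1 : lamS_D e S0 <= 1.
  apply/bigmax_leqP => m hm; rewrite leqNgt; apply/negP => h1m.
  move/existsP: hm => [f /andP[/forallP hf /forallP hd]].
  have arc : forall i, (z1, z0) \in (f i).2.
    move=> i; have /andP[/and3P[hA _ /forallP hc] hS] := hf i.
    have h1 := subsetP hS _ z1S; have h0 := subsetP hS _ z0S.
    move: (hc z1); rewrite h1 /= => /forallP /(_ z0); rewrite h0 /= => c.
    have n10 : z1 != z0 by [].
    have [w hw] := first_arc c n10.
    have := subsetP hA _ hw; rewrite inE /= => hew.
    have -> : z0 = w by apply: val_inj; apply/esym/eqP; move: hew; case: (val w == 0).
    exact: hw.
  have h0m : 0 < m by apply: ltnW.
  move/forallP: (hd (Ordinal h0m)) => /(_ (Ordinal h1m)) /implyP /(_ isT) dij.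
  by move: (disjointFr dij (arc _)); rewrite arc.
apply: leq_trans (leq_trans (min_le _ _ hS0) D1) _.
have hsub : is_subgraph e setT (gedges e).
  by rewrite /is_subgraph subxx; apply/forallP=> g; rewrite subsetT implybT.
have hcon : sg_connected setT (gedges e).
  apply/forallP=> u; apply/implyP=> _; apply/forallP=> w; apply/implyP=> _.
  move/forallP: gc => /(_ u) /forallP /(_ w).
  apply: connect_sub => a b hab; apply: connect1; rewrite /edge_rel.
  apply/andP; split.
    by apply/negP=> /eqP E; rewrite E ei in hab.
  by rewrite inE; apply/existsP; exists a; apply/existsP; exists b; rewrite hab eqxx.
have [F' [_ /and3P[h1 h2 h3]]] := min_tree hsub hcon.
have hG : 0 < #|gedges e|.
  apply/card_gt0P; exists [set z0; z1]; rewrite inE.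
  by apply/existsP; exists z0; apply/existsP; exists z1; rewrite eqxx.
apply: le_min => // S _.
have tp : tree_packing e S 1.
  apply/existsP; exists [ffun _ => (setT, F')]; apply/andP; split.
    by apply/forallP=> i; rewrite ffunE /is_Stree h1 h2 h3 subsetT.
  by apply/forallP=> i; apply/forallP=> j; rewrite !ord1 eqxx.
have hi : 1 < #|gedges e|.+1 by [].
exact: (leq_bigmax_cond (Ordinal hi) tp).
Qed.

Theorem theorem4p6 :
  (* lambda_k(symmetric digraph of G) >= lambda_k(G) for 2 <= k <= n *)
  (forall (T : finType) (e : rel T), symmetric e -> irreflexive e ->
     forall k : nat, 2 <= k <= #|T| -> lamk_G e k <= lamk_D e k)
  /\
  (* sharpness: for every n and 2 <= k <= n some (connected) graph of
     order n attains equality *)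
  (forall n k : nat, 2 <= k <= n ->
     exists e : rel 'I_n, [/\ symmetric e, irreflexive e, g_connected e &
       lamk_D e k = lamk_G e k])
  /\
  (* lambda_2(symmetric digraph of G) = lambda_2(G) *)
  (forall (T : finType) (e : rel T), symmetric e -> irreflexive e ->
     2 <= #|T| -> lamk_D e 2 = lamk_G e 2).
Proof.
split; first by move=> T e es ei k _; exact: part1.
split; first exact: part2.
by move=> T e es ei hT; exact: part3.
Qed.
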